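(* Let $T:[0,1]\to[0,1]$ be a uniform-distribution-preserving transformation that is continuously differentiable on an interval $(a,b)\subset[0,1]$. Then $T'(x)\neq0$ for all $x\in(a,b)$ and $T$ is strictly monotone on $(a,b)$.
   Context: $T$ is uniform-distribution-preserving if $T(U)\sim\mathcal{U}(0,1)$ whenever $U\sim\mathcal{U}(0,1)$. *)

(* Defs.v *)
From HB Require Import structures.
From mathcomp Require Import all_boot all_order all_algebra.
From mathcomp Require Import all_classical all_reals all_analysis.
Set Implicit Arguments. Unset Strict Implicit. Unset Printing Implicit Defensive.
Import Order.TTheory GRing.Theory Num.Theory.
Import numFieldNormedType.Exports.
Local Open Scope classical_set_scope.
Local Open Scope ring_scope.

(* T : [0,1] -> [0,1] is represented by T : R -> R mapping [0,1] into [0,1];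
   values outside [0,1] are irrelevant.  T is uniform-distribution-preserving
   iff T is (Borel) measurable on [0,1] (so T(U) is a random variable) and the
   law of T(U), U ~ U(0,1) (i.e. Lebesgue measure restricted to [0,1]),
   equals U(0,1):  P(T(U) \in B) = lambda({x in [0,1] | T x \in B})
                               = lambda(B `&` [0,1]) for every Borel B. *)
Definition unif_preserving (R : realType) (T : R -> R) : Prop :=
  measurable_fun (`[0%R, 1%R] : set R) (T : R -> R) /\
  forall B : set R, measurable B ->
    (@lebesgue_measure R) ((`[0%R, 1%R] : set R) `&` T @^-1` B) =
    (@lebesgue_measure R) ((`[0%R, 1%R] : set R) `&` B).

(* Main.v *)
Require Import Defs.
From HB Require Import structures.
From mathcomp Require Import all_boot all_order all_algebra.
From mathcomp Require Import all_classical all_reals all_analysis.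
From mathcomp Require Import lra.
Import Order.TTheory GRing.Theory Num.Theory.
Import numFieldNormedType.Exports.
Local Open Scope classical_set_scope.
Local Open Scope ring_scope.

Lemma deriv_nz (R : realType) (T : R -> R) (a b : R) :
  unif_preserving T ->
  0 <= a -> a < b -> b <= 1 ->
  (forall x, a < x < b -> derivable T x 1 /\ {for x, continuous (derive1 T)}) ->
  (forall x, a < x < b -> derive1 T x != 0).
Proof.
move=> [mT hT] a0 ab b1 hd x0 xab; apply/negP => /eqP T0.
have [_ /cvgrPdist_lt cT] := hd x0 xab.
have H : \forall t \near x0, ((t \in `]a, b[) /\ (`|derive1 T t| < 4^-1)).

  near=> t; split.
    near: t; apply: near_in_itvoo; by rewrite in_itv.
  near: t; have : (0:R) < 4^-1 by rewrite invr_gt0.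
  move=> /cT; apply: filterS => t.
  by rewrite T0 sub0r normrN.
move: H => /nbhs_ballP [d /= d0 Hd].
have Hd' t : x0 - d < t < x0 + d -> a < t < b /\ `|derive1 T t| < 4^-1.
  move=> /andP[h1 h2]; have [] := Hd t.
    rewrite /ball /= ltr_norml; apply/andP; split; lra.
  by move=> + ->; rewrite in_itv.
have lip p q : x0 - d < p -> p <= q -> q < x0 + d -> `|T q - T p| <= (q - p) / 4.
  move=> h1 h2 h3.
  have dq t : x0 - d < t < x0 + d -> derivable T t 1.
    by move=> /Hd' [/hd [] + _].
  have [] := @MVT_segment R T (derive1 T) p q h2.
  - move=> t /[!in_itv] /= /andP[t1 t2]; rewrite derive1E.
    apply: derivableP; apply: dq; apply/andP; split; lra.
  - apply: derivable_within_continuous => t /[!in_itv] /= /andP[t1 t2].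
    apply: dq; apply/andP; split; lra.
  - move=> c /[!in_itv] /= /andP[c1 c2] ->.
  have [_ /ltW hc] : a < c < b /\ `|derive1 T c| < 4^-1.
    apply: Hd'; apply/andP; split; lra.
  rewrite normrM (@ger0_norm _ (q - p)) ?subr_ge0 // mulrC.
  by apply: ler_wpM2l; [rewrite subr_ge0|]; lra.
have IJ : [set` `]x0 - d, x0 + d[] `<=`
    (`[0, 1] : set R) `&` T @^-1` [set` `]T x0 - d / 4, T x0 + d / 4[].
  move=> t /= /[!in_itv] /= /andP[t1 t2]; split.
    have [/andP[+ +] _] := Hd' t ltac:(apply/andP; split; lra).
    lra.
  rewrite /=.
  have [tx|xt] := leP t x0.
    have := lip t x0 t1 tx ltac:(lra).
    by rewrite ler_norml => /andP[]; lra.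
  have := lip x0 t ltac:(lra) (ltW xt) t2.
  by rewrite ler_norml => /andP[]; lra.
have mJ : measurable ([set` `]T x0 - d / 4, T x0 + d / 4[] : set R).
  exact: measurable_itv.
have := hT _ mJ.
have m01 : measurable (`[0, 1] : set R) by exact: measurable_itv.
move=> E.
have : (@lebesgue_measure R [set` `]x0 - d, x0 + d[%R] <=
        @lebesgue_measure R [set` `]T x0 - d / 4, T x0 + d / 4[%R])%E.
  apply: (@le_trans _ _ (lebesgue_measure ((`[0, 1] : set R) `&` T @^-1` [set` `]T x0 - d / 4, T x0 + d / 4[%R]))).
    apply: le_measure; last exact: IJ.
      by rewrite inE; exact: measurable_itv.
    by rewrite inE; exact: mT.
  rewrite E; apply: le_measure; last exact: subIsetr.
    by rewrite inE; exact: measurableI.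
  by rewrite inE.
rewrite !lebesgue_measure_itv /= !lte_fin.
rewrite ifT; last lra.
rewrite ifT; last lra.
rewrite -!EFinD lee_fin; lra.
Unshelve. all: by end_near.
Qed.

Theorem lemmaB1 (R : realType) (T : R -> R) (a b : R) :
  (forall x, 0 <= x <= 1 -> 0 <= T x <= 1) ->
  unif_preserving T ->
  0 <= a -> a < b -> b <= 1 ->
  (forall x, a < x < b -> derivable T x 1 /\ {for x, continuous (derive1 T)}) ->
  (forall x, a < x < b -> derive1 T x != 0) /\
  ({in `]a, b[ &, forall x y, x < y -> T x < T y} \/
   {in `]a, b[ &, forall x y, x < y -> T y < T x}).
Proof.
move=> _ hU a0 ab b1 hd.
have nz := @deriv_nz R T a b hU a0 ab b1 hd.
split => //.
have cont : {in `]a, b[, continuous T}.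
  move=> x /[!in_itv] /= xab.
  apply/differentiable_continuous/derivable1_diffP; exact: (hd x xab).1.
have cont' : {in `]a, b[%classic, continuous T}.
  by move=> x /[!inE] /= xab; apply: cont.
have df : forall x, x \in `]a, b[%R -> derivable T x 1.
  by move=> x /[!in_itv] /= /hd [].
have H p q : a < p -> p <= q -> q < b ->
    (derive1 T p < 0 < derive1 T q) \/ (derive1 T q < 0 < derive1 T p) -> False.
  move=> ap pq qb hs.
  have [] := @IVT R (derive1 T) p q 0 pq.
  - apply: continuous_in_subspaceT => x /[!inE] /= /[!in_itv] /= /andP[x1 x2].
    apply: (hd x _).2; apply/andP; split; lra.
  - rewrite ge_min le_max; case: hs => /andP[h1 h2];
      apply/andP; split; apply/orP; by [left; lra | right; lra].
  - move=> c /[!in_itv] /= /andP[c1 c2] c0.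
    have cab : a < c < b by apply/andP; split; lra.
    by move: (nz c cab); rewrite c0 eqxx.
pose m := (a + b) / 2.
have ma : a < m < b by rewrite /m; apply/andP; split; lra.
have [pos|neg] := ltP 0 (derive1 T m).
  left; move=> x0 y0 xi yi xy; apply: (@gtr0_derive1_lt_oo R T a b df _ cont') => //.
  move=> x /[!in_itv] /= xab; have := nz x xab.
  case: (ltP 0 (derive1 T x)) => // hx hx0.
  have hx' : derive1 T x < 0 by rewrite lt_neqAle hx0.
  exfalso; case/andP: xab => x1 x2; case/andP: ma => m1 m2.
  have [xm|mx] := leP x m.
    apply: (H x m) => //; left; exact/andP.
  apply: (H m x) => //; [exact: ltW | right; exact/andP].
have neg' : derive1 T m < 0 by rewrite lt_neqAle neg (nz m ma).
right; move=> x y xi yi xy; apply: (@ltr0_derive1_lt_oo R T a b df _ cont') => //.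
move=> z /[!in_itv] /= zab; have := nz z zab.
case: (ltP (derive1 T z) 0) => // hz hz0.
have hz' : 0 < derive1 T z by rewrite lt_neqAle eq_sym hz0.
exfalso; case/andP: zab => z1 z2; case/andP: ma => m1 m2.
have [zm|mz] := leP z m.
  apply: (H z m) => //; right; exact/andP.
apply: (H m z) => //; [exact: ltW | left; exact/andP].
Qed.
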